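(* Let $1\le b<\frac{n}{2}-1$ and let $T$ be a tree attaining the maximum value of $M_2$ over $\mathcal{CT}^*_{n,b}$. Then $T$ has at least one vertex of degree $4$, and the subgraph of $T$ induced by the vertices of degree $4$ is a tree.
   Context: A chemical tree is a tree with maximum degree at most $4$. A branching vertex is a vertex of degree greater than $2$. $\mathcal{CT}^*_{n,b}$ is the class of all $n$-vertex chemical trees with exactly $b$ branching vertices. $M_2(G)=\sum_{uv\in E(G)}d_ud_v$, where $d_v$ is the degree of $v$. *)

(* Defs.v *)
From mathcomp Require Import all_boot.
Set Implicit Arguments. Unset Strict Implicit. Unset Printing Implicit Defensive.

Section Graphs.
Variable n : nat.

Definition simple_graph (e : rel 'I_n) : Prop :=
  symmetric e /\ irreflexive e.

Definition deg (e : rel 'I_n) (v : 'I_n) : nat := #|[set u | e v u]|.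

Definition edges_in (e : rel 'I_n) (S : {set 'I_n}) : {set 'I_n * 'I_n} :=
  [set p : 'I_n * 'I_n | [&& p.1 < p.2, e p.1 p.2, p.1 \in S & p.2 \in S]].

Definition induced_tree (e : rel 'I_n) (S : {set 'I_n}) : Prop :=
  S != set0 /\
  (forall u v, u \in S -> v \in S ->
     connect (fun x y => [&& e x y, x \in S & y \in S]) u v) /\
  #|edges_in e S| = #|S| - 1.

Definition is_tree (e : rel 'I_n) : Prop :=
  simple_graph e /\ induced_tree e [set: 'I_n].

Definition chemical_tree (e : rel 'I_n) : Prop :=
  is_tree e /\ forall v, deg e v <= 4.

Definition nbranching (e : rel 'I_n) : nat := #|[set v | 2 < deg e v]|.

Definition in_CTstar (b : nat) (e : rel 'I_n) : Prop :=
  chemical_tree e /\ nbranching e = b.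

Definition M2 (e : rel 'I_n) : nat :=
  \sum_(p in edges_in e [set: 'I_n]) deg e p.1 * deg e p.2.

End Graphs.

(* Main.v *)
Require Import Defs.
From mathcomp Require Import all_boot.
From mathcomp Require Import zify.
Set Implicit Arguments. Unset Strict Implicit. Unset Printing Implicit Defensive.

Lemma sum_ind a b c d : a <= b ->
  \sum_(a <= i < b) ((c <= i) && (i < d)) = minn b d - maxn a c.
Proof.
elim: b => [|b IH] ab.
  rewrite big_geq //; lia.
case: (leqP a b) => h.
  rewrite big_nat_recr //= IH //; case: (leqP c b) => h1; case: (ltnP b d) => h2 /=; lia.
have -> : a = b.+1 by lia.
rewrite big_geq //; lia.
Qed.


Lemma pick_sum (m x : nat) (F : nat -> nat) : x < m -> \sum_(i < m) (x == i) * F i = F x.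
Proof.
move=> h; rewrite (bigD1 (Ordinal h)) //= eqxx mul1n big1 ?addn0 // => i hi.
suff -> : (x == i) = false by [].
apply/negbTE; move: hi; apply: contra => /eqP E; apply/eqP/val_inj => /=; by rewrite E.
Qed.

Lemma card_sumb (T : finType) (P : pred T) : #|[set v | P v]| = \sum_(v : T) (P v : nat).
Proof.
rewrite -sum1dep_card big_mkcond; apply: eq_bigr => v _; by case: (P v).
Qed.

Lemma sum_ind0 a b d : a <= b -> \sum_(a <= i < b) (i < d) = minn b d - a.
Proof.
move=> ab; rewrite -(sum_ind 0 d ab); apply: eq_big_nat => i _ //.
Qed.

Section PTree.
Variable n' : nat.
Local Notation n := n'.+1.
Variable p : nat -> nat.
Hypothesis hp : forall i, 0 < i < n -> p i < i.

Definition ptree : rel 'I_n := fun x y => ((0 < x) && (val y == p x)) || ((0 < y) && (val x == p y)).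

Lemma ptree_sym : symmetric ptree.
Proof. by move=> x y; rewrite /ptree orbC. Qed.

Lemma ptree_irr : irreflexive ptree.
Proof.
move=> x; rewrite /ptree orbb; apply/negP => /andP [x0 /eqP E].
have h : 0 < x < n by rewrite x0 ltn_ord.
by have := hp h; rewrite -E ltnn.
Qed.

Lemma ptree_conn0 (u : 'I_n) : connect ptree u ord0.
Proof.
suff H : forall m (u : 'I_n), (u : nat) <= m -> connect ptree u ord0 by apply: (H u).
elim=> [|m IH] w hw.
  have -> : w = ord0 by apply: val_inj; rewrite /=; move: hw; rewrite leqn0 => /eqP.
  exact: connect0.
case: (posnP (w : nat)) => [w0|w0].
  have -> : w = ord0 by apply: val_inj; rewrite /= w0.
  exact: connect0.
have h : 0 < w < n by rewrite w0 ltn_ord.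
have hpw := hp h.
have pn : p w < n by apply: ltn_trans hpw (ltn_ord w).
apply: (connect_trans (y := inord (p w))).
  apply: connect1; rewrite /ptree w0 /= inordK // eqxx //.
apply: IH; rewrite /= inordK //; lia.
Qed.

Lemma ptree_conn (u v : 'I_n) :
  connect (fun x y => [&& ptree x y, x \in [set: 'I_n] & y \in [set: 'I_n]]) u v.
Proof.
rewrite (@eq_connect _ _ ptree); last by move=> x y; rewrite !in_setT !andbT.
apply: (connect_trans (ptree_conn0 u)).
by rewrite (sym_connect_sym ptree_sym); apply: ptree_conn0.
Qed.

Definition pe (i : 'I_n) : 'I_n * 'I_n := (inord (p i), i).

Lemma ptree_edges : edges_in ptree [set: 'I_n] = [set pe i | i in [set i : 'I_n | 0 < i]].
Proof.
apply/setP => -[x y]; rewrite inE /= !in_setT !andbT; apply/idP/imsetP.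
  case/andP => xy /orP [/andP [x0 /eqP E]|/andP [y0 /eqP E]].
    have h : 0 < x < n by rewrite x0 ltn_ord.
    by move: (hp h) xy; rewrite -E /=; lia.
  exists y; first by rewrite inE.
  rewrite /pe; congr pair; apply: val_inj => /=; rewrite inordK // -E; exact: ltn_ord.
case=> i; rewrite inE => i0 [-> ->].
have h : 0 < i < n by rewrite i0 ltn_ord.
have hpi := hp h.
have pn : p i < n by apply: ltn_trans hpi (ltn_ord i).
by rewrite /pe /= inordK // hpi /ptree i0 /= inordK // eqxx orbT.
Qed.

Lemma pe_inj : injective pe.
Proof. by move=> i j [_ ->]. Qed.

Lemma card_pos : #|[set i : 'I_n | 0 < i]| = n'.
Proof.
have : [set i : 'I_n | 0 < i] = ~: [set ord0].
  by apply/setP => i; rewrite !inE lt0n.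
move=> ->; have := cardsC [set (ord0 : 'I_n)]; rewrite cards1 card_ord; lia.
Qed.

Lemma ptree_tree : is_tree ptree.
Proof.
split; first by split; [exact: ptree_sym | exact: ptree_irr].
split; first by apply/set0Pn; exists ord0.
split; first by move=> u v _ _; exact: ptree_conn.
rewrite ptree_edges card_imset; last exact: pe_inj.
by rewrite card_pos cardsT card_ord subn1.
Qed.

Definition Dn (v : nat) := (0 < v) + \sum_(0 <= i < n) ((0 < i) && (p i == v)).

Lemma ptree_deg (v : 'I_n) : deg ptree v = Dn v.
Proof.
rewrite /deg card_sumb /Dn.
transitivity (\sum_(u : 'I_n) (((0 < v) && (val u == p v)) + ((0 < u) && (p u == v)))).
  apply: eq_bigr => u _; rewrite /ptree.
  case h1: ((0 < v) && (val u == p v)); case h2: ((0 < u) && (p u == v)) => //=.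
  - case/andP: h1 => v0 /eqP E1; case/andP: h2 => u0 /eqP E2.
    have hv : 0 < v < n by rewrite v0 ltn_ord.
    have hu : 0 < u < n by rewrite u0 ltn_ord.
    move: (hp hv) (hp hu); rewrite -E1 -E2 /=; lia.
  - by move: h2; rewrite eq_sym => ->.
  - by move: h2; rewrite eq_sym => ->.
rewrite big_split /=; congr addn; last by rewrite big_mkord.
case: (posnP v) => [v0|v0] /=.
  by rewrite big1.
have hv : 0 < v < n by rewrite v0 ltn_ord.
have pn : p v < n by apply: ltn_trans (hp hv) (ltn_ord v).
rewrite -[RHS](pick_sum (fun _ => 1) pn) /=; apply: eq_bigr => i _.
by rewrite muln1 eq_sym.
Qed.

Lemma ptree_M2 : M2 ptree = \sum_(1 <= i < n) Dn i * Dn (p i).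
Proof.
rewrite /M2 ptree_edges big_imset /=; last by move=> ? ? _ _; apply: pe_inj.
transitivity (\sum_(i : 'I_n | 0 < i) Dn i * Dn (p i)).
  apply: eq_big => [i|i]; first by rewrite inE.
  rewrite inE => i0; have hi : 0 < i < n by rewrite i0 ltn_ord.
  have pn : p i < n by apply: ltn_trans (hp hi) (ltn_ord i).
  by rewrite /pe /= !ptree_deg inordK // mulnC.
rewrite big_mkcond /= -(big_mkord xpredT (fun i => if 0 < i then Dn i * Dn (p i) else 0)).
rewrite big_ltn // /=; apply: eq_big_nat => i /andP [i0 _].
by rewrite i0.
Qed.

End PTree.


Section CompA.
Variables (n' b : nat).
Local Notation n := n'.+1.
Hypothesis b1 : 1 <= b.
Hypothesis hn : 3 * b + 2 <= n.

Definition pA (i : nat) := if i < 3 * b + 2 then (i - 2) %/ 3 else i - (2 * b + 2).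

Lemma pA_lt i : 0 < i < n -> pA i < i.
Proof. rewrite /pA; case: ifP => _; lia. Qed.

Lemma DA v : v < n -> Dn n' pA v = (if v < b then 4 else 1 + (v + 2 * b + 2 < n)).
Proof.
move=> vn; rewrite /Dn (@big_cat_nat _ _ _ (3 * b + 2)) //=.
rewrite (eq_big_nat _ _ (F2 := fun i => nat_of_bool (((if v == 0 then 1 else 3 * v + 2) <= i) && (i < 3 * v + 5)))); last first.
  move=> i /andP [_ hi]; rewrite /pA hi.
  congr (nat_of_bool _); by apply/idP/idP; case: (v =P 0) => h /=; lia.
rewrite (eq_big_nat _ _ (m := 3 * b + 2) (F2 := fun i => nat_of_bool ((v + 2 * b + 2 <= i) && (i < v + 2 * b + 3)))); last first.
  move=> i /andP [hi _]; rewrite /pA (_ : (i < 3 * b + 2) = false); last by apply/negbTE; rewrite -leqNgt.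
  congr (nat_of_bool _); by apply/idP/idP; lia.
rewrite !sum_ind //.
case: (v =P 0) => h; case: (ltnP v b) => h2; case: (ltnP (v + 2 * b + 2) n) => h3 /=; lia.
Qed.

Lemma DA_lo v : v < b -> Dn n' pA v = 4.
Proof. move=> h; rewrite DA ?h //; lia. Qed.
Lemma DA_hi v : b <= v -> v < n -> Dn n' pA v = 1 + (v + 2 * b + 2 < n).
Proof. by move=> h1 h2; rewrite DA // ltnNge h1. Qed.
Lemma pA_1 i : i < 3 * b + 2 -> pA i = (i - 2) %/ 3.
Proof. by rewrite /pA => ->. Qed.
Lemma pA_2 i : 3 * b + 2 <= i -> pA i = i - (2 * b + 2).
Proof. by rewrite /pA ltnNge => ->. Qed.

Definition valA := 16 * (b - 1) + (4 * (3 * b + 2 - b) + 4 * (minn (3 * b + 2) (n - 2 * b - 2) - maxn b 0))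
  + (2 * (n - (3 * b + 2)) + 2 * (minn n (n - 2 * b - 2) - maxn (3 * b + 2) 0)).

Lemma M2A_val : M2 (@ptree n' pA) = valA.
Proof.
have hb1 : b <= 3 * b + 2 by lia.
have hb2 : 1 <= b by lia.
rewrite (ptree_M2 pA_lt) (@big_cat_nat _ _ _ b) //.
rewrite (@big_cat_nat _ _ _ (3 * b + 2) b n) //.
rewrite (eq_big_nat _ _ (m := 1) (F2 := fun _ => 16)); last first.
  move=> i /andP [h1 h2]; rewrite DA_lo //; rewrite DA_lo //; rewrite pA_1; lia.
rewrite (eq_big_nat _ _ (m := b) (F2 := fun i => 4 + 4 * nat_of_bool ((0 <= i) && (i < n - 2 * b - 2)))); last first.
  move=> i /andP [h1 h2]; rewrite DA_hi //; last lia.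
  rewrite DA_lo; last by rewrite pA_1 //; lia.
  case: (ltnP (i + 2 * b + 2) n) => h /=; lia.
rewrite (eq_big_nat _ _ (m := 3 * b + 2) (F2 := fun i => 2 + 2 * nat_of_bool ((0 <= i) && (i < n - 2 * b - 2)))); last first.
  move=> i /andP [h1 h2]; rewrite DA_hi //; last lia.
  rewrite pA_2 // DA_hi; [|lia|lia].
  case: (ltnP (i + 2 * b + 2) n) => h; case: (ltnP (i - (2 * b + 2) + 2 * b + 2) n) => h' /=; lia.
have hbn : b <= n by lia.
rewrite !big_split !sum_nat_const_nat /= !sum_ind0 //.
all: rewrite /valA; lia.
Qed.

Lemma compAt : in_CTstar b (@ptree n' pA) /\ M2 (@ptree n' pA) = valA.
Proof.
split; last exact: M2A_val.
split; first split; first exact: ptree_tree pA_lt.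
  move=> v; rewrite (ptree_deg pA_lt) DA //; case: ifP => //; case: (_ < n) => /=; lia.
rewrite /nbranching (@card_sumb _ (fun v : 'I_n => 2 < deg (@ptree n' pA) v)).
transitivity (\sum_(v : 'I_n) nat_of_bool ((0 <= v) && (v < b))).
  apply: eq_bigr => v _; rewrite (ptree_deg pA_lt) DA //.
  by case: (ltnP v b) => h /=; case: (_ < n).
rewrite -(big_mkord xpredT (fun v => nat_of_bool ((0 <= v) && (v < b)))) sum_ind //; lia.
Qed.
End CompA.

Section CompB.
Variables (n' k j : nat).
Local Notation n := n'.+1.
Hypothesis k1 : 1 <= k.
Hypothesis hn : n = 3 * k + 2 + 2 * j.

Definition pB (i : nat) := if i < 3 * k + 2 then (i - 2) %/ 3 else k + (i - (3 * k + 2)) %/ 2.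

Lemma pB_lt i : 0 < i < n -> pB i < i.
Proof. rewrite /pB; case: (ltnP i (3 * k + 2)) => h; lia. Qed.

Lemma pB_1 i : i < 3 * k + 2 -> pB i = (i - 2) %/ 3.
Proof. by rewrite /pB => ->. Qed.
Lemma pB_2 i : 3 * k + 2 <= i -> pB i = k + (i - (3 * k + 2)) %/ 2.
Proof. by rewrite /pB ltnNge => ->. Qed.

Lemma DB v : v < n -> Dn n' pB v = (if v < k then 4 else 1 + 2 * (v < k + j)).
Proof.
move=> vn; have h3 : 3 * k + 2 <= n by lia.
rewrite /Dn (@big_cat_nat _ _ _ (3 * k + 2)) //=.
rewrite (eq_big_nat _ _ (m := 0) (F2 := fun i => nat_of_bool (((if v == 0 then 1 else 3 * v + 2) <= i) && (i < 3 * v + 5)))); last first.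
  move=> i /andP [_ hi]; rewrite pB_1 //.
  congr (nat_of_bool _); by apply/idP/idP; case: (v =P 0) => h /=; lia.
case: (ltnP v k) => hvk.
  rewrite (eq_big_nat _ _ (m := 3 * k + 2) (F2 := fun i => nat_of_bool ((0 <= i) && (i < 0)))); last first.
    move=> i /andP [hi _]; rewrite pB_2 //.
    congr (nat_of_bool _); by apply/idP/idP; lia.
  rewrite !sum_ind //.
  case: (v =P 0) => h /=; lia.
rewrite (eq_big_nat _ _ (m := 3 * k + 2) (F2 := fun i => nat_of_bool ((2 * v + k + 2 <= i) && (i < 2 * v + k + 4)))); last first.
  move=> i /andP [hi _]; rewrite pB_2 //.
  congr (nat_of_bool _); by apply/idP/idP; lia.
rewrite !sum_ind //.
case: (v =P 0) => h; case: (ltnP v (k + j)) => h2 /=; lia.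
Qed.

Lemma DB_lo v : v < k -> Dn n' pB v = 4.
Proof. move=> h; rewrite DB ?h //; lia. Qed.
Lemma DB_hi v : k <= v -> v < n -> Dn n' pB v = 1 + 2 * (v < k + j).
Proof. by move=> h1 h2; rewrite DB // ltnNge h1. Qed.

Definition valB := 16 * (k - 1) + (4 * (3 * k + 2 - k) + 8 * (minn (3 * k + 2) (k + j) - k))
  + (3 * (n - (3 * k + 2)) + 6 * (minn n (k + j) - (3 * k + 2))).

Lemma M2B_val : M2 (@ptree n' pB) = valB.
Proof.
have hb1 : k <= 3 * k + 2 by lia.
have hb3 : 3 * k + 2 <= n by lia.
rewrite (ptree_M2 pB_lt) (@big_cat_nat _ _ _ k) //; last lia.
rewrite (@big_cat_nat _ _ _ (3 * k + 2) k n) //.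
rewrite (eq_big_nat _ _ (m := 1) (F2 := fun _ => 16)); last first.
  move=> i /andP [h1 h2]; rewrite DB_lo //; rewrite DB_lo //; rewrite pB_1; lia.
rewrite (eq_big_nat _ _ (m := k) (F2 := fun i => 4 + 8 * nat_of_bool (i < k + j))); last first.
  move=> i /andP [h1 h2]; rewrite DB_hi //; last lia.
  rewrite DB_lo; last by rewrite pB_1 //; lia.
  case: (ltnP i (k + j)) => h /=; lia.
rewrite (eq_big_nat _ _ (m := 3 * k + 2) (F2 := fun i => 3 + 6 * nat_of_bool (i < k + j))); last first.
  move=> i /andP [h1 h2]; rewrite DB_hi //; last lia.
  rewrite pB_2 // DB_hi; [|lia|lia].
  case: (ltnP i (k + j)) => h; case: (ltnP (k + (i - (3 * k + 2)) %/ 2) (k + j)) => h' /=; lia.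
rewrite !big_split !sum_nat_const_nat /= !sum_ind0 //.
all: rewrite /valB; lia.
Qed.

Lemma compBt : in_CTstar (k + j) (@ptree n' pB) /\ M2 (@ptree n' pB) = valB.
Proof.
split; last exact: M2B_val.
split; first split; first exact: ptree_tree pB_lt.
  move=> v; rewrite (ptree_deg pB_lt) DB //; case: ifP => //; case: (_ < k + j) => /=; lia.
rewrite /nbranching (@card_sumb _ (fun v : 'I_n => 2 < deg (@ptree n' pB) v)).
transitivity (\sum_(v : 'I_n) nat_of_bool ((0 <= v) && (v < k + j))).
  apply: eq_bigr => v _; rewrite (ptree_deg pB_lt) DB //.
  case: (ltnP v k) => h /=; case: (ltnP v (k + j)) => h2 /=; lia.
rewrite -(big_mkord xpredT (fun v => nat_of_bool ((0 <= v) && (v < k + j)))) sum_ind //; lia.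
Qed.
End CompB.

Section Gen.
Variable n : nat.
Variable e : rel 'I_n.
Hypothesis esym : symmetric e.
Hypothesis eirr : irreflexive e.

Lemma DL (C : {set 'I_n}) (w : 'I_n -> 'I_n -> nat) : (forall u v, w u v = w v u) ->
  2 * \sum_(p in edges_in e C) w p.1 p.2 =
  \sum_(u : 'I_n) \sum_(v : 'I_n) (e u v && (u \in C) && (v \in C)) * w u v.
Proof.
move=> wsym.
have H1 : \sum_(p in edges_in e C) w p.1 p.2 =
   \sum_(u : 'I_n) \sum_(v : 'I_n) ((u < v) && e u v && (u \in C) && (v \in C)) * w u v.
  rewrite pair_bigA big_mkcond /=; apply: eq_bigr => -[u v] _ /=.
  rewrite inE /=; case: (u < v); case: (e u v); case: (u \in C); case: (v \in C) => //=; by rewrite mul1n.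
have H2 : \sum_(u : 'I_n) \sum_(v : 'I_n) (e u v && (u \in C) && (v \in C)) * w u v =
   \sum_(u : 'I_n) \sum_(v : 'I_n) ((u < v) && e u v && (u \in C) && (v \in C)) * w u v +
   \sum_(u : 'I_n) \sum_(v : 'I_n) ((v < u) && e u v && (u \in C) && (v \in C)) * w u v.
  rewrite -big_split /=; apply: eq_bigr => u _; rewrite -big_split /=.
  apply: eq_bigr => v _.
  case: (ltngtP u v) => [h|h|/val_inj ->]; first by rewrite mul0n addn0.
    by rewrite mul0n add0n.
  by rewrite eirr.
have H3 : \sum_(u : 'I_n) \sum_(v : 'I_n) ((v < u) && e u v && (u \in C) && (v \in C)) * w u v =
   \sum_(u : 'I_n) \sum_(v : 'I_n) ((u < v) && e u v && (u \in C) && (v \in C)) * w u v.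
  rewrite exchange_big /=; apply: eq_bigr => u _; apply: eq_bigr => v _.
  by rewrite esym wsym; case: (u \in C); case: (v \in C); rewrite ?andbT ?andbF.
by rewrite H2 H3 H1 mul2n addnn.
Qed.
End Gen.

Section Tree.
Variable n : nat.
Variable e : rel 'I_n.
Hypothesis He : is_tree e.

Lemma tsym : symmetric e. Proof. by case: He => [[]]. Qed.
Lemma tirr : irreflexive e. Proof. by case: He => [[]]. Qed.
Lemma tconn u v : connect e u v.
Proof.
case: He => _ [_ [H _]].
have := H u v (in_setT u) (in_setT v).
by rewrite (@eq_connect _ _ e) // => x y; rewrite !in_setT !andbT.
Qed.
Lemma tedges : #|edges_in e [set: 'I_n]| = n - 1.
Proof. by case: He => _ [_ [_ ->]]; rewrite cardsT card_ord. Qed.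

Definition grow (X : {set 'I_n}) : {set 'I_n} := X :|: [set y | [exists x in X, e y x]].

Lemma forest (C : {set 'I_n}) : C != set0 -> #|edges_in e C| < #|C|.
Proof.
case/set0Pn => c cC.
pose L k := iter k grow C.
have reach v : exists k, v \in L k.
  have /connectP [p pth lst] := tconn v c.
  elim: p v pth lst => [|w p IH] v /= pth lst.
    by exists 0; rewrite /L /= -lst.
  case/andP: pth => evw pth.
  have [k hk] := IH w pth lst.
  exists k.+1; rewrite /L /= /grow inE; apply/orP; right; rewrite inE.
  by apply/existsP; exists w; rewrite hk evw.
pose dist v := ex_minn (reach v).
have dist_in v : v \in L (dist v) by rewrite /dist; case: ex_minnP.
have dist_min v k : v \in L k -> dist v <= k.
  by rewrite /dist; case: ex_minnP => m _ hm /hm.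
have nxt_ex v : v \notin C -> exists x, (x \in L (dist v).-1) && e v x.
  move=> vC.
  have : v \in L (dist v) by [].
  case E: (dist v) => [|d].
    by rewrite /L /= => vC'; rewrite vC' in vC.
  rewrite /L /= /grow inE => /orP [vd|].
    by have := dist_min _ _ vd; rewrite E ltnn.
  by rewrite inE => /existsP [x /andP [xd evx]]; exists x; rewrite xd evx.
pose nxt v := odflt v [pick x | (x \in L (dist v).-1) && e v x].
have nxtP v : v \notin C -> e v (nxt v) /\ dist (nxt v) < dist v.
  move=> vC; rewrite /nxt; case: pickP => [x /andP [xd evx]|H0] /=.
    split=> //; have := dist_min _ _ xd.
    have : dist v != 0.
      apply/eqP=> E; have := dist_in v; rewrite E /L /= => vC'.
      by rewrite vC' in vC.
    by case: (dist v).
  by have [x hx] := nxt_ex v vC; rewrite H0 in hx.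
pose g (v : 'I_n) := if v < nxt v then (v, nxt v) else (nxt v, v).
have ginj : {in ~: C &, injective g}.
  move=> v w; rewrite !inE => vC wC.
  have [ev dv] := nxtP v vC; have [ew dw] := nxtP w wC.
  have key : nxt v = w -> nxt w = v -> False.
    move=> E1 E2; move: dv dw; rewrite E1 E2 => a b.
    by have := ltn_trans a b; rewrite ltnn.
  rewrite /g; case: ifP => hv; case: ifP => hw; case=> h1 h2 //.
    by exfalso; apply: key.
  by exfalso; apply: key.
have gsub : (g @: ~: C) \subset edges_in e [set: 'I_n] :\: edges_in e C.
  apply/subsetP => p /imsetP [v]; rewrite inE => vC ->.
  have [ev _] := nxtP v vC.
  have vnv : v != nxt v by apply/eqP => E; rewrite -E tirr in ev.
  rewrite /g; case: ifP => hv; rewrite !inE /= ?in_setT ?andbT.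
    by rewrite hv ev (negbTE vC) !andbF.
  have hv' : nxt v < v by rewrite ltn_neqAle eq_sym vnv leqNgt hv.
  by rewrite hv' tsym ev (negbTE vC) !andbF.
have h1 := subset_leq_card gsub.
rewrite card_in_imset // cardsD in h1.
have sub : edges_in e C \subset edges_in e [set: 'I_n].
  by apply/subsetP => p; rewrite !inE => /and4P [-> -> _ _].
rewrite (setIidPr sub) tedges in h1.
have h2 := cardsC C; rewrite card_ord in h2.
have h3 : 0 < #|C| by apply/card_gt0P; exists c.
have h4 : #|edges_in e C| <= #|edges_in e [set: 'I_n]| := subset_leq_card sub.
rewrite tedges in h4.
move: h1 h2 h3 h4; move: #|~: C| #|C| #|edges_in e C| => x y z; lia.
Qed.

Lemma exists_out (A : {set 'I_n}) : #|A| < n -> exists w, w \notin A.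
Proof.
move=> h.
have : ~~ ([set: 'I_n] \subset A).
  apply/negP => /subset_leq_card; rewrite cardsT card_ord => h'.
  by move: h h'; move: #|A| => x; lia.
by case/subsetPn => w _ hw; exists w.
Qed.

Lemma deg_gt0 v : 1 < n -> 0 < deg e v.
Proof.
move=> n1; rewrite lt0n; apply/negP => /eqP d0.
have nb u : e v u = false.
  apply/negP => evu.
  have hu : u \in [set u | e v u] by rewrite inE.
  have : 0 < deg e v by apply/card_gt0P; exists u.
  by rewrite d0.
have [w hw] : exists w, w \notin [set v] by apply: exists_out; rewrite cards1.
have cl : closed e (mem [set v]).
  move=> x y exy; rewrite !inE.
  case: (eqVneq x v) => [xv|xv]; first by rewrite xv nb in exy.
  case: (eqVneq y v) => [yv|//]; by rewrite yv tsym nb in exy.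
have := closed_connect cl (tconn v w).
by rewrite inE eqxx (negbTE hw).
Qed.

Lemma deg1_uniq u v w : deg e u = 1 -> e u v -> e u w -> v = w.
Proof.
move=> /eqP/cards1P [z hz] euv euw.
have : v \in [set y | e u y] by rewrite inE.
have : w \in [set y | e u y] by rewrite inE.
by rewrite hz !inE => /eqP -> /eqP ->.
Qed.

Lemma no_leaf_edge u v : 2 < n -> e u v -> deg e u = 1 -> deg e v = 1 -> False.
Proof.
move=> n2 euv du dv.
have [w hw] : exists w, w \notin [set u; v].
  by apply: exists_out; rewrite cards2; case: (u != v); lia.
have evu : e v u by rewrite tsym.
have cl : closed e (mem [set u; v]).
  move=> x y exy; rewrite !inE.
  case: (eqVneq x u) => [xu|xu].
    by rewrite xu in exy *; rewrite (deg1_uniq du exy euv) eqxx orbT.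
  case: (eqVneq x v) => [xv|xv].
    by rewrite xv in exy *; rewrite (deg1_uniq dv exy evu) eqxx orbT.
  case: (eqVneq y u) => [yu|yu].
    by rewrite yu tsym in exy; rewrite (deg1_uniq du exy euv) eqxx in xv.
  case: (eqVneq y v) => [yv|//].
  by rewrite yv tsym in exy; rewrite (deg1_uniq dv exy evu) eqxx in xu.
have := closed_connect cl (tconn u w).
by move: hw; rewrite !inE eqxx /= => /negbTE ->.
Qed.


Lemma split_bound (S : {set 'I_n}) u v : u \in S -> v \in S ->
  ~~ connect (fun x y => [&& e x y, x \in S & y \in S]) u v ->
  #|edges_in e S| + 2 <= #|S|.
Proof.
set R := (fun x y => _).
move=> uS vS nc.
pose A := [set x in S | connect R u x].
pose B := S :\: A.
have uA : u \in A by rewrite inE uS connect0.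
have vB : v \in B by rewrite !inE vS nc.
have AS : A \subset S by apply/subsetP => x; rewrite inE => /andP [].
have sub : edges_in e S \subset edges_in e A :|: edges_in e B.
  apply/subsetP => -[x y]; rewrite !inE /= => /and4P [xy exy xS yS].
  have Rxy : R x y by rewrite /R exy xS yS.
  have Ryx : R y x by rewrite /R tsym exy xS yS.
  case xA: (connect R u x).
    by rewrite xy exy xS yS (connect_trans xA (connect1 Rxy)).
  case yA: (connect R u y); last by rewrite xy exy xS yS orbT.
  by rewrite (connect_trans yA (connect1 Ryx)) in xA.
have h1 := subset_leq_card sub.
rewrite cardsU in h1.
have A0 : A != set0 by apply/set0Pn; exists u.
have B0 : B != set0 by apply/set0Pn; exists v.
have hA := forest A0.
have hB := forest B0.
have hS : #|B| = #|S| - #|A| by rewrite cardsD (setIidPr AS).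
have hAS := subset_leq_card AS.
move: h1 hA hB hS hAS.
move: #|edges_in e S| #|edges_in e A| #|edges_in e B| #|edges_in e A :&: edges_in e B| #|A| #|B| #|S|.
move=> *; lia.
Qed.


Lemma deg_sum v : deg e v = \sum_(u : 'I_n) (e v u : nat).
Proof. by rewrite /deg card_sumb. Qed.

Definition Nc i := \sum_(v : 'I_n) (deg e v == i).
Definition Ac i j := \sum_(u : 'I_n) \sum_(v : 'I_n) [&& e u v, deg e u == i & deg e v == j].

Hypothesis chem : forall v, deg e v <= 4.
Hypothesis n3 : 2 < n.

Lemma degs v : deg e v < 5. Proof. by rewrite ltnS chem. Qed.

Lemma sumN : \sum_(i < 5) Nc i = n.
Proof.
rewrite /Nc exchange_big /=.
transitivity (\sum_(v : 'I_n) 1).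
  apply: eq_bigr => v _; rewrite -[X in _ = X](pick_sum (fun _ => 1) (degs v)).
  by apply: eq_bigr => i _; rewrite muln1.
by rewrite sum_nat_const card_ord muln1.
Qed.

Lemma sumdeg : \sum_(i < 5) i * Nc i = 2 * (n - 1).
Proof.
have -> : \sum_(i < 5) i * Nc i = \sum_(v : 'I_n) deg e v.
  rewrite /Nc; under eq_bigr do rewrite big_distrr.
  rewrite exchange_big /=; apply: eq_bigr => v _.
  rewrite -[X in _ = X](pick_sum id (degs v)); apply: eq_bigr => i _; by rewrite mulnC.
rewrite -tedges.
have := DL tsym tirr [set: 'I_n] (w := fun _ _ => 1) (fun _ _ => erefl).
rewrite sum1_card => ->.
apply: eq_bigr => u _; rewrite deg_sum; apply: eq_bigr => v _.
by rewrite !in_setT !andbT muln1.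
Qed.

Lemma sumA i : \sum_(j < 5) Ac i j = i * Nc i.
Proof.
rewrite /Ac /Nc exchange_big /= big_distrr /=.
apply: eq_bigr => u _.
rewrite exchange_big /=.
transitivity (\sum_(v : 'I_n) (deg e u == i) * (e u v : nat)).
  apply: eq_bigr => v _.
  rewrite -[X in _ = X](pick_sum (fun _ => (deg e u == i) * (e u v : nat)) (degs v)).
  apply: eq_bigr => j _ /=.
  by case: (e u v); case: (deg e u == i); case: (deg e v == j).
rewrite -big_distrr /= -deg_sum.
by case: eqP => [->|]; rewrite ?mul0n ?muln0 // mul1n muln1.
Qed.

Lemma Asym i j : Ac i j = Ac j i.
Proof.
rewrite /Ac exchange_big /=; apply: eq_bigr => u _; apply: eq_bigr => v _.
by rewrite tsym; case: (e v u); case: (deg e u == j); case: (deg e v == i).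
Qed.

Lemma A11 : Ac 1 1 = 0.
Proof.
apply: big1 => u _; apply: big1 => v _.
case euv: (e u v) => //=; case: eqP => //= du; case: eqP => //= dv.
by case: (no_leaf_edge n3 euv du dv).
Qed.

Lemma Aii i : Ac i i = 2 * #|edges_in e [set v | deg e v == i]|.
Proof.
have := DL tsym tirr [set v | deg e v == i] (w := fun _ _ => 1) (fun _ _ => erefl).
rewrite sum1_card => ->.
apply: eq_bigr => u _; apply: eq_bigr => v _.
by rewrite !inE muln1 andbA.
Qed.

Lemma Ab : Ac 3 3 + Ac 3 4 + Ac 4 3 + Ac 4 4 = 2 * #|edges_in e [set v | 2 < deg e v]|.
Proof.
have := DL tsym tirr [set v | 2 < deg e v] (w := fun _ _ => 1) (fun _ _ => erefl).
rewrite sum1_card => ->.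
rewrite /Ac -!big_split /=; apply: eq_bigr => u _; rewrite -!big_split /=.
apply: eq_bigr => v _; rewrite !inE muln1.
move: (degs u) (degs v).
case: (deg e u) => [|[|[|[|[|x]]]]] //; case: (deg e v) => [|[|[|[|[|y]]]]] //;
  by case: (e u v).
Qed.

Lemma M2A : 2 * M2 e = \sum_(i < 5) \sum_(j < 5) i * j * Ac i j.
Proof.
have := DL tsym tirr [set: 'I_n] (w := fun u v => deg e u * deg e v) (fun u v => mulnC _ _).
rewrite /M2 => ->.
transitivity (\sum_(u : 'I_n) \sum_(v : 'I_n) \sum_(i < 5) \sum_(j < 5)
   i * j * [&& e u v, deg e u == i & deg e v == j]).
  apply: eq_bigr => u _; apply: eq_bigr => v _.
  rewrite !in_setT !andbT.
  transitivity (\sum_(i < 5) (deg e u == i) * (i * deg e v * e u v)).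
    rewrite (pick_sum (fun i => i * deg e v * e u v) (degs u)).
    by rewrite mulnC.
  apply: eq_bigr => i _.
  transitivity (\sum_(j < 5) (deg e v == j) * ((deg e u == i) * (i * j * e u v))).
    rewrite (pick_sum (fun j => (deg e u == i) * (i * j * e u v)) (degs v)).
    by [].
  apply: eq_bigr => j _.
  by case: (e u v); case: (deg e u == i); case: (deg e v == j); rewrite /= ?muln0 ?muln1 ?mul0n ?mul1n.
rewrite /Ac.
under eq_bigr do rewrite exchange_big /=.
rewrite exchange_big /=; apply: eq_bigr => i _.
under eq_bigr do rewrite exchange_big /=.
rewrite exchange_big /=; apply: eq_bigr => j _.
rewrite big_distrr; apply: eq_bigr => u _; by rewrite big_distrr.
Qed.

Lemma N0 : Nc 0 = 0.
Proof. apply: big1 => v _; by rewrite eqn0Ngt deg_gt0 //; lia. Qed.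

Lemma Ai0 i : Ac i 0 = 0.
Proof.
apply: big1 => u _; apply: big1 => v _.
by rewrite (eqn0Ngt (deg e v)) deg_gt0 ?andbF //; lia.
Qed.

Lemma cardS i : #|[set v | deg e v == i]| = Nc i.
Proof. by rewrite card_sumb. Qed.

Lemma nbrN : nbranching e = Nc 3 + Nc 4.
Proof.
rewrite /nbranching card_sumb /Nc -big_split /=; apply: eq_bigr => v _.
by move: (degs v); case: (deg e v) => [|[|[|[|[|x]]]]].
Qed.

Lemma stats :
  let E i := #|edges_in e [set v | deg e v == i]| in
  (Nc 1 + Nc 2 + Nc 3 + Nc 4 = n) /\
  (Nc 1 + 2 * Nc 2 + 3 * Nc 3 + 4 * Nc 4 = 2 * (n - 1)) /\
  (Ac 1 2 + Ac 1 3 + Ac 1 4 = Nc 1) /\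
  (Ac 1 2 + 2 * E 2 + Ac 2 3 + Ac 2 4 = 2 * Nc 2) /\
  (Ac 1 3 + Ac 2 3 + 2 * E 3 + Ac 3 4 = 3 * Nc 3) /\
  (Ac 1 4 + Ac 2 4 + Ac 3 4 + 2 * E 4 = 4 * Nc 4) /\
  (2 * M2 e = 2 * (2 * Ac 1 2 + 3 * Ac 1 3 + 4 * Ac 1 4 + 6 * Ac 2 3 + 8 * Ac 2 4 + 12 * Ac 3 4)
     + 8 * E 2 + 18 * E 3 + 32 * E 4) /\
  (2 * E 3 + 2 * Ac 3 4 + 2 * E 4 = 2 * #|edges_in e [set v | 2 < deg e v]|).
Proof.
move=> E.
have sN := sumN.
have sD := sumdeg.
have sM := M2A.
have s1 := sumA 1. have s2 := sumA 2. have s3 := sumA 3. have s4 := sumA 4.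
have sb := Ab.
rewrite !big_ord_recr !big_ord0 /= in sN sD sM s1 s2 s3 s4.
have e2 := Aii 2. have e3 := Aii 3. have e4 := Aii 4.
rewrite -/(E 2) in e2; rewrite -/(E 3) in e3; rewrite -/(E 4) in e4.
rewrite (Asym 2 1) (Asym 3 1) (Asym 4 1) (Asym 3 2) (Asym 4 2) (Asym 4 3) in sM s2 s3 s4 sb.
rewrite !Ai0 A11 N0 in sN sD sM s1 s2 s3 s4.
rewrite e2 e3 e4 in sM s2 s3 s4 sb.
move: sN sD sM s1 s2 s3 s4 sb.
move: (Nc 1) (Nc 2) (Nc 3) (Nc 4) (Ac 1 2) (Ac 1 3) (Ac 1 4) (Ac 2 3) (Ac 2 4) (Ac 3 4) (E 2) (E 3) (E 4) (M2 e).
move=> *; repeat split; lia.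
Qed.


End Tree.


Definition valAn (n b : nat) := 16 * (b - 1) + (4 * (3 * b + 2 - b) + 4 * (minn (3 * b + 2) (n - 2 * b - 2) - maxn b 0))
  + (2 * (n - (3 * b + 2)) + 2 * (minn n (n - 2 * b - 2) - maxn (3 * b + 2) 0)).

Definition valBn (n k j : nat) := 16 * (k - 1) + (4 * (3 * k + 2 - k) + 8 * (minn (3 * k + 2) (k + j) - k))
  + (3 * (n - (3 * k + 2)) + 6 * (minn n (k + j) - (3 * k + 2))).

Lemma coreA n b N1 N2 N3 N4 a12 a13 a14 a23 a24 a34 m22 m33 m44 Eb M :
  1 <= b -> 2*b+2 < n -> 3*b+2 <= n ->
  N1+N2+N3+N4 = n -> N3+N4 = b -> N1+2*N2+3*N3+4*N4 = 2*(n-1) ->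
  a12+a13+a14 = N1 ->
  a12+2*m22+a23+a24 = 2*N2 ->
  a13+a23+2*m33+a34 = 3*N3 ->
  a14+a24+a34+2*m44 = 4*N4 ->
  (1 <= N3 -> m33 + 1 <= N3) ->
  (1 <= N4 -> m44 + 1 <= N4) ->
  2*m33 + 2*a34 + 2*m44 = 2*Eb -> Eb + 1 <= b ->
  (N4 = 0 \/ m44 + 2 <= N4) ->
  2*M = 2*(2*a12+3*a13+4*a14+6*a23+8*a24+12*a34) + 8*m22+18*m33+32*m44 ->
  valAn n b <= M -> False.
Proof. rewrite /valAn; move=> *; lia. Qed.

Lemma coreB n b N1 N2 N3 N4 a12 a13 a14 a23 a24 a34 m22 m33 m44 Eb M :
  1 <= b -> 2*b+2 < n -> n < 3*b+2 ->
  N1+N2+N3+N4 = n -> N3+N4 = b -> N1+2*N2+3*N3+4*N4 = 2*(n-1) ->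
  a12+a13+a14 = N1 ->
  a12+2*m22+a23+a24 = 2*N2 ->
  a13+a23+2*m33+a34 = 3*N3 ->
  a14+a24+a34+2*m44 = 4*N4 ->
  (1 <= N3 -> m33 + 1 <= N3) ->
  (1 <= N4 -> m44 + 1 <= N4) ->
  2*m33 + 2*a34 + 2*m44 = 2*Eb -> Eb + 1 <= b ->
  (N4 = 0 \/ m44 + 2 <= N4) ->
  2*M = 2*(2*a12+3*a13+4*a14+6*a23+8*a24+12*a34) + 8*m22+18*m33+32*m44 ->
  valBn n (n - 2 * b - 2) (3 * b + 2 - n) <= M -> False.
Proof. rewrite /valBn; move=> *; lia. Qed.

Lemma compA_ex n b : 1 <= b -> 3 * b + 2 <= n ->
  exists e' : rel 'I_n, in_CTstar b e' /\ M2 e' = valAn n b.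
Proof.
case: n => [|n'] b1 hn; first by lia.
have [h1 h2] := compAt b1 hn.
by exists (@ptree n' (pA b)); split => //; rewrite h2.
Qed.

Lemma compB_ex n b : 1 <= b -> 2 * b + 2 < n -> n < 3 * b + 2 ->
  exists e' : rel 'I_n, in_CTstar b e' /\ M2 e' = valBn n (n - 2 * b - 2) (3 * b + 2 - n).
Proof.
case: n => [|n'] b1 hn hn2; first by lia.
have hk : 1 <= n'.+1 - 2 * b - 2 by lia.
have hnn : n'.+1 = 3 * (n'.+1 - 2 * b - 2) + 2 + 2 * (3 * b + 2 - n'.+1) by lia.
have [h1 h2] := compBt hk hnn.
exists (@ptree n' (pB (n'.+1 - 2 * b - 2))); split; last by rewrite h2.
by rewrite (_ : n'.+1 - 2 * b - 2 + (3 * b + 2 - n'.+1) = b) in h1; last lia.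
Qed.


Theorem lemma14 (n b : nat) (e : rel 'I_n) :
  1 <= b -> 2 * b + 2 < n ->
  in_CTstar b e ->
  (forall e' : rel 'I_n, in_CTstar b e' -> M2 e' <= M2 e) ->
  (exists v : 'I_n, deg e v = 4) /\
  induced_tree e [set v | deg e v == 4].
Proof.
move=> b1 hn [[He chem] nb] hmax.
have n3 : 2 < n by lia.
have [s1 [s2 [s3 [s4 [s5 [s6 [s7 s8]]]]]]] := stats He chem n3.
have hb : Nc e 3 + Nc e 4 = b by rewrite -nb (nbrN chem).
have ne (i : nat) : 1 <= Nc e i -> [set v | deg e v == i] != set0.
  by move=> h; rewrite -cards_eq0 -lt0n cardS.
have f3 : 1 <= Nc e 3 -> #|edges_in e [set v | deg e v == 3]| + 1 <= Nc e 3.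
  move=> h; have := forest He (ne 3 h); rewrite cardS; lia.
have f4 : 1 <= Nc e 4 -> #|edges_in e [set v | deg e v == 4]| + 1 <= Nc e 4.
  move=> h; have := forest He (ne 4 h); rewrite cardS; lia.
have fb : #|edges_in e [set v | 2 < deg e v]| + 1 <= b.
  have hS : [set v | 2 < deg e v] != set0.
    by rewrite -cards_eq0 -lt0n -/(nbranching e) nb.
  have := forest He hS; rewrite /nbranching in nb; rewrite nb; lia.
have key : ~ (Nc e 4 = 0 \/ #|edges_in e [set v | deg e v == 4]| + 2 <= Nc e 4).
  move=> viol.
  case: (leqP (3 * b + 2) n) => reg.
    have [e' [he' hm]] := compA_ex b1 reg.
    have := hmax e' he'; rewrite hm => LB.
    exact: (coreA b1 hn reg s1 hb s2 s3 s4 s5 s6 f3 f4 s8 fb viol s7 LB).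
  have [e' [he' hm]] := compB_ex b1 hn reg.
  have := hmax e' he'; rewrite hm => LB.
  exact: (coreB b1 hn reg s1 hb s2 s3 s4 s5 s6 f3 f4 s8 fb viol s7 LB).
have N4pos : 1 <= Nc e 4.
  by rewrite lt0n; apply/eqP => h; apply: key; left.
split.
  have /set0Pn [v] := ne 4 N4pos; rewrite inE => /eqP hv; by exists v.
split; first exact: ne 4 N4pos.
split.
  move=> u v uS vS; apply: contraT => nc; exfalso; apply: key; right.
  have := split_bound He uS vS nc; rewrite cardS; lia.
have := f4 N4pos; rewrite cardS.
move: key; move: (Nc e 4) #|edges_in e [set v | deg e v == 4]| => x y; lia.
Qed.
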